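(* Let $p$ be a prime, let $A\subset\mathbb F_p$ be nonempty and let $\lambda$ be a probability measure on $\mathbb F_p$. Then $$\sum_{b\in\mathbb F_p^*}\lambda(b)\|1_A*1_{bA}\|_2\ll\left(\|\lambda\|_2+|A|^{-1/2}+|A|^{1/2}p^{-1/2}\right)^{c_0}|A|^{3/2},$$ with an absolute implied constant.
   Context: $\mathbb F_p^*=\mathbb F_p\setminus\{0\}$; $bA=\{ba:a\in A\}$; $1_A$ is the indicator function of $A$. A probability measure is $\lambda:\mathbb F_p\to\mathbb R_{\ge0}$ with $\sum\lambda=1$. $\|f\|_2=(\sum_{x\in\mathbb F_p}|f(x)|^2)^{1/2}$ and $f*g(x)=\sum_{y\in\mathbb F_p}f(y)g(x-y)$. $c_0>0$ is a fixed absolute constant (whose existence is a theorem of Bourgain) such that for every prime $p$ and all $A\subset\mathbb F_p$, $B\subset\mathbb F_p^*$ with $|A|\ge|B|$, $\sum_{b\in B}E(A,bA)\ll\min(p/|A|,|B|)^{-c_0}|A|^3|B|$, where $E(A,A')$ is the number of solutions of $a_1+a_1'=a_2+a_2'$ with $a_i\in A$, $a_i'\in A'$. *)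

(* Defs.v *)
From HB Require Import structures.
From mathcomp Require Import all_boot all_order all_algebra.
From mathcomp Require Import all_classical all_reals all_analysis.
Set Implicit Arguments. Unset Strict Implicit. Unset Printing Implicit Defensive.
Import Order.TTheory GRing.Theory Num.Theory.
Local Open Scope ring_scope.

Definition dilate (p : nat) (b : 'F_p) (A : {set 'F_p}) : {set 'F_p} :=
  [set b * a | a in A].

Definition indA (R : realType) (p : nat) (A : {set 'F_p}) (x : 'F_p) : R :=
  (x \in A)%:R.

Definition fconv (R : realType) (p : nat) (f g : 'F_p -> R) (x : 'F_p) : R :=
  \sum_(y : 'F_p) f y * g (x - y).

Definition l2norm (R : realType) (p : nat) (f : 'F_p -> R) : R :=
  Num.sqrt (\sum_(x : 'F_p) `|f x| ^+ 2).

Definition prob_measure (R : realType) (p : nat) (lam : 'F_p -> R) : Prop :=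
  (forall x, 0 <= lam x) /\ \sum_(x : 'F_p) lam x = 1.

Definition energy (p : nat) (A A' : {set 'F_p}) : nat :=
  #|[set t : 'F_p * 'F_p * 'F_p * 'F_p |
      [&& t.1.1.1 \in A, t.1.1.2 \in A', t.1.2 \in A, t.2 \in A'
        & t.1.1.1 + t.1.1.2 == t.1.2 + t.2]]|.

Definition bourgain_bound (R : realType) (c0 K : R) : Prop :=
  forall (p : nat) (A B : {set 'F_p}), prime p ->
    (0 < #|B|)%N -> (0 : 'F_p) \notin B -> (#|B| <= #|A|)%N ->
    (\sum_(b in B) (energy A (dilate b A))%:R : R)
      <= K * (Num.min ((p%:R : R) / #|A|%:R) #|B|%:R) `^ (- c0)
             * #|A|%:R ^+ 3 * #|B|%:R.

(* Main.v *)
Require Import Defs.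
From HB Require Import structures.
From mathcomp Require Import all_boot all_order all_algebra.
From mathcomp Require Import all_classical all_reals all_analysis.
From mathcomp Require Import ring lra.
Import Order.TTheory GRing.Theory Num.Theory.
Local Open Scope ring_scope.

Lemma conv_sq (R : realType) (p : nat) (A A' : {set 'F_p}) :
  \sum_(x : 'F_p) `|fconv (@indA R p A) (@indA R p A') x| ^+ 2
    <= (energy A A')%:R.
Proof.
set T3 := [set t : 'F_p * 'F_p * 'F_p | [&& t.1.2 \in A, t.1.1 - t.1.2 \in A',
           t.2 \in A & t.1.1 - t.2 \in A']].
have E1 : \sum_(x : 'F_p) `|fconv (@indA R p A) (@indA R p A') x| ^+ 2
          = (#|T3|)%:R.
  transitivity (\sum_(x : 'F_p) \sum_(y : 'F_p) \sum_(z : 'F_p)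
     (((x, y, z) \in T3) : nat)%:R : R).
    apply: eq_bigr => x _.
    rewrite real_normK ?num_real // expr2 /fconv mulr_suml.
    apply: eq_bigr => y _; rewrite mulr_sumr; apply: eq_bigr => z _.
    rewrite inE /= /indA -!natrM !mulnb.
    by case: (y \in A); case: (x - y \in A'); case: (z \in A); case: (x - z \in A').
  rewrite pair_big /= pair_big /= -sum1_card natr_sum big_mkcond /=.
  rewrite [RHS]big_mkcond; apply: eq_bigr => -[[x y] z] _ /=.
  by case: ifP.
have -> : energy A A' = #|[set t : 'F_p * 'F_p * 'F_p * 'F_p |
      [&& t.1.1.1 \in A, t.1.1.2 \in A', t.1.2 \in A, t.2 \in A'
        & t.1.1.1 + t.1.1.2 == t.1.2 + t.2]]| by [].
rewrite E1 ler_nat.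
set g := fun t : 'F_p * 'F_p * 'F_p => (t.1.2, t.1.1 - t.1.2, t.2, t.1.1 - t.2).
have ginj : injective g.
  move=> [[x y] z] [[x' y'] z'] E.
  have /= e1 := congr1 (fun u => u.1.1.1) E.
  have /= e2 := congr1 (fun u => u.1.1.2) E.
  have /= e3 := congr1 (fun u => u.1.2) E.
  have : x - y + y = x' - y' + y' by rewrite e2 e1.
  by rewrite !subrK => ->; rewrite e1 e3.
rewrite -(card_imset T3 ginj); apply: subset_leq_card.
apply/fintype.subsetP => _ /imsetP [[[x y] z] H ->]; move: H; rewrite !inE /= => /and4P [h1 h2 h3 h4].
by rewrite h1 h2 h3 h4 /= !subrKC.
Qed.

Lemma card_dilate (p : nat) (A : {set 'F_p}) (b : 'F_p) :
  b != 0 -> #|dilate b A| = #|A|.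
Proof. by move=> b0; rewrite /dilate card_imset //; apply: mulfI. Qed.

Lemma energy_lb (p : nat) (A : {set 'F_p}) (b : 'F_p) :
  b != 0 -> (#|A| * #|A| <= energy A (dilate b A))%N.
Proof.
move=> b0.
set D := dilate b A.
have -> : energy A D = #|[set t : 'F_p * 'F_p * 'F_p * 'F_p |
      [&& t.1.1.1 \in A, t.1.1.2 \in D, t.1.2 \in A, t.2 \in D
        & t.1.1.1 + t.1.1.2 == t.1.2 + t.2]]| by [].
rewrite -{2}(@card_dilate p A b b0) -/D -cardsX.
set h := fun t : 'F_p * 'F_p => (t.1, t.2, t.1, t.2).
have hinj : injective h.
  move=> [x y] [x' y'] E.
  have /= e1 := congr1 (fun u => u.1.1.1) E.
  have /= e2 := congr1 (fun u => u.1.1.2) E.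
  by rewrite e1 e2.
rewrite -(card_imset _ hinj); apply: subset_leq_card.
apply/fintype.subsetP => _ /imsetP [[x y] H ->]; move: H; rewrite !inE /= => /andP [h1 h2].
by rewrite h1 h2 /= eqxx.
Qed.

Lemma c0_le1 (R : realType) (c0 K : R) :
  0 < c0 -> bourgain_bound c0 K -> c0 <= 1.
Proof.
move=> c0pos hB; rewrite leNgt; apply/negP => c1.
set e := c0 - 1.
have e0 : 0 < e by rewrite subr_gt0.
set K1 := Num.max K 1.
have KK1 : K <= K1 by rewrite le_max lexx.
have K10 : 0 < K1 by rewrite lt_max ltr01 orbT.
set m := (Num.truncn (K1 `^ (e^-1))).+2.
have mgt : K1 `^ (e^-1) < m%:R.
  apply: (lt_trans (truncnS_gt _)); rewrite ltr_nat /m; exact: ltnSn.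
have m0 : (0 : R) < m%:R by rewrite ltr0n.
have qgt : K1 < m%:R `^ e.
  have := gt0_ltr_powR e0 _ _ mgt.
  rewrite -powRrM mulVf ?gt_eqF // powRr1 ?(ltW K10) //; apply.
    by rewrite nnegrE powR_ge0.
  by rewrite nnegrE ltW.
have [p mp hp] := prime_above (m * m).
set A : {set 'F_p} := [set ((val i).+1)%:R | i : 'I_m].
have small : forall i : 'I_m, ((val i).+1 < p)%N.
  move=> i; apply: (leq_ltn_trans _ mp).
  apply: (leq_trans (ltn_ord i)); rewrite leq_pmulr //.
have finj : injective (fun i : 'I_m => (((val i).+1)%:R : 'F_p)).
  move=> i j /= E.
  have := congr1 (@nat_of_ord _) E; rewrite !(val_Fp_nat hp) !modn_small ?small //.
  by move=> [] /val_inj.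
have cardA : #|A| = m by rewrite card_imset // card_ord.
have A0 : (0 : 'F_p) \notin A.
  apply/negP => /imsetP [i _ E].
  have := congr1 (@nat_of_ord _) E; rewrite (val_Fp_nat hp) modn_small ?small //.
have hm0 : (0 < m)%N by [].
have := hB p A A hp; rewrite cardA => /(_ hm0 A0 (leqnn _)).
have -> : Num.min ((p%:R : R) / m%:R) m%:R = m%:R.
  apply/eqP; rewrite eq_minr ler_pdivlMr // -natrM ler_nat.
  exact: ltnW.
have lhs : ((m ^ 3)%:R : R) <= \sum_(b in A) ((energy A (dilate b A))%:R : R).
  apply: (@le_trans _ _ (\sum_(b in A) ((m * m)%:R : R))).
    rewrite sumr_const cardA -mulrnA ler_nat.
    by rewrite expnS expnS expn1 mulnA.
  apply: ler_sum => b hb; rewrite ler_nat -cardA; apply: energy_lb.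
  by apply: contraNneq A0 => <-.
move=> /(le_trans lhs).
rewrite powRN -(mulr_powRB1 (ltW m0) c0pos) -/e natrX.
have q0 : 0 < m%:R `^ e :> R by apply: powR_gt0.
have -> : K * (m%:R * m%:R `^ e)^-1 * m%:R ^+ 3 * m%:R = (K * m%:R ^+ 3) / m%:R `^ e :> R.
  by field; rewrite ?gt_eqF.
rewrite ler_pdivlMr // mulrC ler_pM2r ?exprn_gt0 // => H.
by have := lt_le_trans (le_lt_trans KK1 qgt) H; rewrite ltxx.
Qed.

Lemma amgm (R : realType) (x y t : R) : 0 < t ->
  x * y <= t / 2 * x ^+ 2 + (2 * t)^-1 * y ^+ 2.
Proof.
move=> t0; rewrite -subr_ge0.
have -> : t / 2 * x ^+ 2 + (2 * t)^-1 * y ^+ 2 - x * y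
          = (2 * t)^-1 * (t * x - y) ^+ 2 by field; rewrite gt_eqF.
by rewrite mulr_ge0 ?sqr_ge0 // invr_ge0 mulr_ge0 // ltW.
Qed.

Lemma sqr_powR (R : realType) (x r : R) : 0 <= x -> (x `^ r) ^+ 2 = x `^ (r * 2).
Proof. by move=> x0; rewrite -powR_mulrn ?powR_ge0 // powRrM. Qed.

Lemma sq_le (R : realType) (x y : R) : 0 <= x -> 0 <= y -> x ^+ 2 <= y ^+ 2 -> x <= y.
Proof. by move=> x0 y0; rewrite (ler_pXn2r (_ : (0 < 2)%N)) ?nnegrE. Qed.

Theorem corollary2 (R : realType) (c0 K : R) :
  0 < c0 -> bourgain_bound c0 K ->
  exists C : R, 0 < C /\
    forall (p : nat) (A : {set 'F_p}) (lam : 'F_p -> R),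
      prime p -> (0 < #|A|)%N -> prob_measure lam ->
      \sum_(b : 'F_p | b != 0)
          lam b * l2norm (fconv (@indA R p A) (@indA R p (dilate b A)))
        <= C * (l2norm lam + (#|A|%:R : R) `^ (- (1/2))
                 + (#|A|%:R : R) `^ (1/2) * (p%:R : R) `^ (- (1/2))) `^ c0
             * (#|A|%:R : R) `^ (3/2).
Proof.
move=> c0pos hB.
have c01 := @c0_le1 R c0 K c0pos hB.
set K1 := Num.max K 1.
have KK1 : K <= K1 by rewrite le_max lexx.
have K1ge1 : 1 <= K1 by rewrite le_max lexx orbT.
have K10 : 0 < K1 by apply: lt_le_trans K1ge1.
exists (2 * K1); split; first by rewrite mulr_gt0.
move=> p A lam hp hA [lam0 lamsum].
set a : R := #|A|%:R.
have a0 : 0 < a by rewrite ltr0n.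
set pr : R := p%:R.
have p0 : 0 < pr by rewrite ltr0n prime_gt0.
set s := l2norm lam.
have s0 : 0 <= s by apply: sqrtr_ge0.
set w := a `^ (- (1/2)).
set z := a `^ (1/2) * pr `^ (- (1/2)).
have w0 : 0 < w by apply: powR_gt0.
have z0 : 0 <= z by rewrite mulr_ge0 ?powR_ge0.
set d := s + w + z.
have d0 : 0 < d by rewrite /d -addrA ltr_wpDl // ltr_wpDr.
set v := d `^ c0.
have v0 : 0 < v by apply: powR_gt0.
set u := d ^+ 2.
have u0 : 0 < u by rewrite exprn_gt0.
set al := a `^ (3/2).
have al0 : 0 < al by apply: powR_gt0.
have hal : al ^+ 2 = a ^+ 3.
  rewrite sqr_powR ?(ltW a0) //.
  have -> : 3 / 2 * 2 = 3%:R :> R by field.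
  by rewrite powR_mulrn ?(ltW a0).
have hv : v ^+ 2 = u `^ c0.
  by rewrite /v /u -!powR_mulrn ?powR_ge0 ?(ltW d0) // powRAC.
have sq_mono : forall x y : R, 0 <= x -> x <= y -> x ^+ 2 <= y ^+ 2.
  by move=> x y x0 xy; rewrite lerXn2r ?nnegrE // (le_trans x0).
have hua : 1 <= u * a.
  have : w ^+ 2 <= u.
    apply: sq_mono; first exact: ltW.
    rewrite /d -addrA; apply: ler_wpDl s0 _; by rewrite ?lerDl ?lerDr.
  rewrite sqr_powR ?(ltW a0) //.
  have -> : - (1/2) * 2 = -1 :> R by field.
  by rewrite powR_inv1 ?(ltW a0) // => h; rewrite -ler_pdivrMr // mul1r.
have hup : a <= u * pr.
  have : z ^+ 2 <= u.
    apply: sq_mono; first exact: z0.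
    rewrite /d; apply: ler_wpDl _ (lexx z); by rewrite addr_ge0 // ltW.
  rewrite exprMn !sqr_powR ?(ltW a0) ?(ltW p0) //.
  have -> : - (1/2) * 2 = -1 :> R by field.
  have -> : (1/2) * 2 = 1 :> R by field.
  by rewrite powR_inv1 ?(ltW p0) // powRr1 ?(ltW a0) // => h; rewrite -ler_pdivrMr.
have hsu : s ^+ 2 <= u.
  apply: sq_mono => //; rewrite /d -addrA; apply: ler_wpDr (lexx s); by rewrite addr_ge0 // ltW.
set f := fun b : 'F_p => l2norm (fconv (@indA R p A) (@indA R p (dilate b A))).
set E := fun b : 'F_p => ((energy A (dilate b A))%:R : R).
have f0 : forall b, 0 <= f b by move=> b; apply: sqrtr_ge0.
have hf : forall b, f b ^+ 2 <= E b.
  move=> b; rewrite /f /l2norm sqr_sqrtr; first exact: conv_sq.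
  by apply: sumr_ge0 => x _; rewrite sqr_ge0.
set Bd := [set b : 'F_p | (b != 0) && (K1 * v ^+ 2 * a ^+ 3 < f b ^+ 2)].
have key : forall B' : {set 'F_p}, B' \subset Bd -> (0 < #|B'|)%N ->
    (#|B'| <= #|A|)%N ->
    #|B'|%:R * u < 1 /\
    \sum_(b in B') E b <= K1 * (#|B'|%:R `^ c0)^-1 * a ^+ 3 * #|B'|%:R.
  move=> B' sub k0 kA.
  have B'0 : (0 : 'F_p) \notin B'.
    apply/negP => /(fintype.subsetP sub); by rewrite inE eqxx.
  have hb := hB p A B' hp k0 B'0 kA.
  set kr : R := #|B'|%:R.
  have kr0 : 0 < kr by rewrite ltr0n.
  rewrite -/a -/pr -/kr in hb.
  set M := Num.min (pr / a) kr in hb.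
  have M0 : 0 < M by rewrite lt_min kr0 divr_gt0.
  set Mp := M `^ c0.
  have Mp0 : 0 < Mp by apply: powR_gt0.
  have lo : kr * (K1 * v ^+ 2 * a ^+ 3) < \sum_(b in B') E b.
    rewrite mulr_natl -sumr_const; apply: ltr_sum.
      case/card_gt0P: k0 => x xB; apply/hasP; exists x => //.
    move=> b bB; apply: (lt_le_trans _ (hf b)).
    by move: (fintype.subsetP sub b bB); rewrite inE => /andP [].
  have up : \sum_(b in B') E b <= K1 * Mp^-1 * a ^+ 3 * kr.
    apply: (le_trans hb); rewrite -powRN -/M -!mulrA; apply: ler_wpM2r => //.
    by rewrite !mulr_ge0 ?powR_ge0 ?exprn_ge0 ?(ltW a0) ?(ltW kr0).
  have hv2 : v ^+ 2 * Mp < 1.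
    have c1 : 0 < K1 * a ^+ 3 * kr by rewrite !mulr_gt0 ?exprn_gt0.
    have := lt_le_trans lo up.
    have -> : kr * (K1 * v ^+ 2 * a ^+ 3) = (K1 * a ^+ 3 * kr) * v ^+ 2 by ring.
    have -> : K1 * Mp^-1 * a ^+ 3 * kr = (K1 * a ^+ 3 * kr) * Mp^-1 by ring.
    rewrite ltr_pM2l // => h.
    by rewrite -(mulVf (lt0r_neq0 Mp0)) ltr_pM2r.
  have huM : u * M < 1.
    rewrite ltNge; apply/negP => h.
    have := @ge0_ler_powR R c0 (ltW c0pos) 1 (u * M).
    rewrite !nnegrE ler01 mulr_ge0 ?(ltW u0) ?(ltW M0) // => /(_ isT isT h).
    rewrite powR1 powRM ?(ltW u0) ?(ltW M0) // -hv -/Mp => h2.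
    by have := lt_le_trans hv2 h2; rewrite ltxx.
  have [hm|hm] := leP (pr / a) kr.
    rewrite /M minEle hm mulrA ltr_pdivrMr // mul1r in huM.
    by have := lt_le_trans huM hup; rewrite ltxx.
  rewrite /M minEle leNgt hm /= in huM hb.
  split; first by rewrite mulrC.
  apply: (le_trans hb); rewrite powRN -!mulrA; apply: ler_wpM2r => //.
  by rewrite !mulr_ge0 ?invr_ge0 ?powR_ge0 ?exprn_ge0 ?(ltW a0) ?(ltW kr0).
have hn : #|Bd|%:R * u < 1.
  have [n0|npos] := posnP #|Bd|; first by rewrite n0 mul0r ltr01.
  set k := minn #|Bd| #|A|.
  have : (k <= #|Bd|)%N by rewrite geq_minl.
  case/card_geqP => sq [usq ssq subq].
  set B' := [set x in sq].
  have cB' : #|B'| = k by rewrite cardsE; move/card_uniqP: usq => ->.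
  have sub : B' \subset Bd by apply/fintype.subsetP => x; rewrite inE => /subq.
  have k0 : (0 < #|B'|)%N by rewrite cB' leq_min npos hA.
  have kA : (#|B'| <= #|A|)%N by rewrite cB' geq_minr.
  have [h1 _] := key B' sub k0 kA.
  move: h1; rewrite cB' /k; case: (leqP #|Bd| #|A|) => hh.
    by [].
  rewrite -/a mulrC => h1.
  by have := lt_le_trans h1 hua; rewrite ltxx.
rewrite (bigID (fun b => b \in Bd)) /=.
have gd : \sum_(i | (i != 0) && (i \notin Bd)) lam i * f i <= K1 * v * al.
  apply: (@le_trans _ _ (\sum_(i | (i != 0) && (i \notin Bd)) lam i * (K1 * v * al))).
    apply: ler_sum => i /andP [i0 iB]; apply: ler_wpM2l; first exact: lam0.
    apply: sq_le (f0 i) _ _; first by rewrite !mulr_ge0 ?(ltW K10) ?(ltW v0) ?(ltW al0).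
    rewrite inE i0 /= -leNgt in iB.
    apply: (le_trans iB); rewrite !exprMn hal; apply: ler_wpM2r.
      by rewrite exprn_ge0 ?(ltW a0).
    apply: ler_wpM2r; first by rewrite exprn_ge0 ?(ltW v0).
    by rewrite expr2 ler_peMr ?(ltW K10).
  rewrite -mulr_suml; apply: ler_piMl; first by rewrite !mulr_ge0 ?(ltW K10) ?(ltW v0) ?(ltW al0).
  rewrite -lamsum big_mkcond /=; apply: ler_sum => i _.
  by case: ifP => // _; apply: lam0.
have bd : \sum_(i | (i != 0) && (i \in Bd)) lam i * f i <= (1 + K1) / 2 * v * al.
  have -> : \sum_(i | (i != 0) && (i \in Bd)) lam i * f i = \sum_(i in Bd) lam i * f i.
    apply: eq_bigl => i /=; apply/idP/idP => [/andP[]//|h]; rewrite h andbT.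
    by move: h; rewrite inE => /andP[].
  set t := v * al / u.
  have t0 : 0 < t by rewrite /t divr_gt0 // mulr_gt0.
  apply: (@le_trans _ _ (\sum_(i in Bd) (t / 2 * lam i ^+ 2 + (2 * t)^-1 * f i ^+ 2))).
    by apply: ler_sum => i _; apply: amgm.
  rewrite big_split /= -!mulr_sumr.
  have s2 : \sum_(i in Bd) lam i ^+ 2 <= u.
    apply: le_trans hsu; rewrite /s /l2norm sqr_sqrtr; last first.
      by apply: sumr_ge0 => x _; rewrite sqr_ge0.
    rewrite big_mkcond /=; apply: ler_sum => i _.
    by case: ifP => _; rewrite ?real_normK ?num_real ?sqr_ge0.
  have f2 : \sum_(i in Bd) f i ^+ 2 <= K1 * al ^+ 2 * v ^+ 2 / u.
    apply: (@le_trans _ _ (\sum_(i in Bd) E i)).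
      by apply: ler_sum => i _; apply: hf.
    have [n0|npos] := posnP #|Bd|.
      rewrite (cards0_eq n0) big_set0.
      apply: divr_ge0; last exact: ltW.
      by rewrite !mulr_ge0 ?exprn_ge0 ?(ltW K10) ?(ltW al0) ?(ltW v0).
    have nA : (#|Bd| <= #|A|)%N.
      rewrite -(ler_nat R) -/a; apply: ltW.
      by have := lt_le_trans hn hua; rewrite mulrC ltr_pM2l.
    have [_ h2] := key Bd (subxx _) npos nA.
    apply: (le_trans h2); rewrite hal hv.
    set n : R := #|Bd|%:R.
    have n0 : 0 < n by rewrite ltr0n.
    have -> : K1 * (n `^ c0)^-1 * a ^+ 3 * n = (K1 * a ^+ 3) * ((n `^ c0)^-1 * n) by ring.
    have -> : K1 * a ^+ 3 * u `^ c0 / u = (K1 * a ^+ 3) * (u `^ c0 / u) by ring.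
    apply: ler_wpM2l; first by rewrite mulr_ge0 ?exprn_ge0 ?(ltW K10) ?(ltW a0).
    rewrite ler_pdivlMr // -mulrA ler_pdivrMl ?powR_gt0 //.
    rewrite -powRM ?(ltW n0) ?(ltW u0) //.
    apply: ger1_powR => //; rewrite mulr_gt0 //=; exact: ltW.
  apply: (le_trans (lerD (ler_wpM2l _ s2) (ler_wpM2l _ f2))).
  - by rewrite divr_ge0 ?(ltW t0).
  - by rewrite invr_ge0 mulr_ge0 ?(ltW t0).
  have -> : t / 2 * u + (2 * t)^-1 * (K1 * al ^+ 2 * v ^+ 2 / u) = (1 + K1) / 2 * v * al.
    by rewrite /t; field; rewrite !lt0r_neq0.
  by [].
apply: (le_trans (lerD bd gd)).
rewrite -subr_ge0.
have -> : 2 * K1 * v * al - ((1 + K1) / 2 * v * al + K1 * v * al)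
   = (K1 - 1) / 2 * (v * al) by field.
by rewrite !mulr_ge0 ?subr_ge0 ?(ltW v0) ?(ltW al0).
Qed.
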